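(* For all integers $1\le k\le n$, \[ \mathbb{P}_n(S_k)=\frac{1}{2}\left(1-\frac{k-1}{n}\right), \] i.e. the probability that the $k$-th boundary step of a uniformly random type-B permutation tableau of size $n$ is a south step equals $\frac12\bigl(1-\frac{k-1}{n}\bigr)$.
   Context: A Ferrers diagram is a left-justified array of cells whose row lengths weakly decrease from top to bottom (rows of length $0$ are allowed). Its half-perimeter is the number of rows plus the number of columns. Its southeast boundary, traversed from the northeast corner to the southwest corner, consists of $n$ unit steps, each south or west; south steps correspond to rows and west steps to columns. We write $S_k$ (resp. $W_k$) for the event that the $k$-th step is south (resp. west). If the diagram has $c$ columns, the shifted Ferrers diagram is obtained by inserting $c$ new left-justified rows above it, of lengths $c,c-1,\dots,1$ from top to bottom; the rightmost cell of each inserted row is a diagonal cell. A type-B permutation tableau of size $n$ is a filling of a shifted Ferrers diagram of half-perimeter $n$ with $0$'s and $1$'s such that: (1) every column contains at least one $1$; (2) no $0$ has both a $1$ above it in its column and a $1$ to its left in its row; (3) if a diagonal cell contains $0$ then every cell of its row contains $0$. The boundary steps of the shifted diagram are those of the underlying Ferrers diagram. Let $\mathcal{B}_n$ be the set of such tableaux, and $\mathbb{P}_n$ the uniform probability measure on $\mathcal{B}_n$. *)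

(* Defs.v *)
From mathcomp Require Import all_boot all_order all_algebra.
Set Implicit Arguments. Unset Strict Implicit. Unset Printing Implicit Defensive.

(* A Ferrers diagram of half-perimeter n is encoded by its southeast boundary
   word w : n.-tuple bool, read from the NE corner to the SW corner,
   true = South step (a row), false = West step (a column).
   Rows are numbered 0.. top to bottom, columns 0.. left to right. *)

Definition ncols (w : seq bool) : nat := count negb w.

Definition south_pos (w : seq bool) (i : nat) : nat :=
  nth 0 [seq p <- iota 0 (size w) | nth false w p] i.

Definition rowlen (w : seq bool) (i : nat) : nat :=
  count negb (drop (south_pos w i).+1 w).

(* Shifted Ferrers diagram: rows 0..c-1 are the inserted left-justified
   staircase rows (row r has cells in columns 0..r, its rightmost cell
   (r,r) being the diagonal cell, so each column j has c-j staircase cells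
   with the diagonal cell on top); row c+i is row i of the Ferrers diagram. *)
Definition inshift (w : seq bool) (r j : nat) : bool :=
  let c := ncols w in
  if r < c then j <= r else j < rowlen w (r - c).

Definition isdiag (w : seq bool) (r j : nat) : bool :=
  let c := ncols w in (r < c) && (j == r).

Definition tabT (n : nat) : finType :=
  (n.-tuple bool * {ffun 'I_n * 'I_n -> bool})%type.

(* A filling f (cells of the n x n grid; cells outside the shifted diagram
   must hold 0) is a type-B permutation tableau of shape w. *)
Definition is_tabB (n : nat) (t : tabT n) : bool :=
  let w := val t.1 in
  let f := t.2 in
  [&& [forall r : 'I_n, forall j : 'I_n, ~~ inshift w r j ==> ~~ f (r, j)],
      [forall j : 'I_n, (j < ncols w) ==> [exists r : 'I_n, f (r, j)]],
      [forall r : 'I_n, forall j : 'I_n,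
         (inshift w r j && ~~ f (r, j)) ==>
         ~~ ([exists r' : 'I_n, (r' < r) && f (r', j)] &&
             [exists j' : 'I_n, (j' < j) && f (r, j')])] &
      [forall r : 'I_n, forall j : 'I_n,
         (isdiag w r j && ~~ f (r, j)) ==> [forall j' : 'I_n, ~~ f (r, j')]]].

Definition tabB (n : nat) : {set tabT n} := [set t | is_tabB t].

Definition probB (n : nat) (E : pred (tabT n)) : rat :=
  (#|[set t in tabB n | E t]|%:R / #|tabB n|%:R)%R.

Definition S_event (n k : nat) : pred (tabT n) :=
  fun t => nth false (val t.1) k.-1.

(* Main.v *)
Require Import Defs.
From mathcomp Require Import all_boot all_order all_algebra.
From mathcomp Require Import zify ring.
Set Implicit Arguments. Unset Strict Implicit. Unset Printing Implicit Defensive.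

Lemma forall0 n (P : pred 'I_n.+1) :
  [forall i, P i] = P ord0 && [forall i : 'I_n, P (lift ord0 i)].
Proof.
apply/forallP/andP => [H|[H0 /forallP H]]; first by split => //; apply/forallP.
by move=> i; case: (unliftP ord0 i) => [j ->|->].
Qed.

Lemma exists0 n (P : pred 'I_n.+1) :
  [exists i, P i] = P ord0 || [exists i : 'I_n, P (lift ord0 i)].
Proof.
apply/existsP/orP => [[i]|[H|/existsP[i H]]]; last by exists (lift ord0 i).
  by case: (unliftP ord0 i) => [j ->|->]; [right; apply/existsP; exists j|left].
by exists ord0.
Qed.

Lemma forallM n (P : pred 'I_n.+1) :
  [forall i, P i] = P ord_max && [forall i : 'I_n, P (lift ord_max i)].
Proof.
apply/forallP/andP => [H|[H0 /forallP H]]; first by split => //; apply/forallP.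
by move=> i; case: (unliftP ord_max i) => [j ->|->].
Qed.

Lemma existsM n (P : pred 'I_n.+1) :
  [exists i, P i] = P ord_max || [exists i : 'I_n, P (lift ord_max i)].
Proof.
apply/existsP/orP => [[i]|[H|/existsP[i H]]]; last by exists (lift ord_max i).
  by case: (unliftP ord_max i) => [j ->|->]; [right; apply/existsP; exists j|left].
by exists ord_max.
Qed.

Lemma sum_tupleS m (F : seq bool -> nat) :
  \sum_(v : m.+1.-tuple bool) F v =
  \sum_(v : m.-tuple bool) (F (rcons v true) + F (rcons v false)).
Proof.
have hinj : injective (fun p : m.-tuple bool * bool => [tuple of rcons p.1 p.2]).
  move=> [a b] [c d] /(congr1 val) /= /rcons_inj [/val_inj -> ->] //.
have hb := inj_card_bij hinj.
rewrite (reindex _ (onW_bij _ (hb _))); last first.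
  by rewrite card_prod !card_tuple card_bool expnS mulnC.
transitivity (\sum_(v : m.-tuple bool) \sum_(b : bool) F (rcons v b)).
  by rewrite pair_big /=.
by apply: eq_bigr => v _; rewrite big_bool.
Qed.

Definition fcons n (b : bool) (c : {ffun 'I_n -> bool}) : {ffun 'I_n.+1 -> bool} :=
  [ffun i => if unlift ord0 i is Some j then c j else b].

Lemma fcons0 n b (c : {ffun 'I_n -> bool}) : fcons b c ord0 = b.
Proof. by rewrite ffunE unlift_none. Qed.
Lemma fconsS n b (c : {ffun 'I_n -> bool}) i : fcons b c (lift ord0 i) = c i.
Proof. by rewrite ffunE liftK. Qed.

Lemma sum_ffunS n (F : {ffun 'I_n.+1 -> bool} -> nat) :
  \sum_(c : {ffun 'I_n.+1 -> bool}) F c =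
  \sum_(b : bool) \sum_(c : {ffun 'I_n -> bool}) F (fcons b c).
Proof.
have hinj : injective (fun p : bool * {ffun 'I_n -> bool} => fcons p.1 p.2).
  move=> [a b] [c d] /= E; have := congr1 (fun f : {ffun _ -> bool} => f ord0) E.
  rewrite !fcons0 => ->; congr pair; apply/ffunP => i.
  by have := congr1 (fun f : {ffun _ -> bool} => f (lift ord0 i)) E; rewrite !fconsS.
have hb := inj_card_bij hinj.
rewrite (reindex _ (onW_bij _ (hb _))); last first.
  by rewrite card_prod !card_ffun card_bool !card_ord expnS.
by rewrite pair_big /=.
Qed.

Definition sl (w : seq bool) := [seq p <- iota 0 (size w) | nth false w p].

Lemma spE w i : south_pos w i = nth 0 (sl w) i. Proof. by []. Qed.

Lemma sl_rcons w b : sl (rcons w b) = sl w ++ (if b then [:: size w] else [::]).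
Proof.
rewrite /sl size_rcons -addn1 iotaD filter_cat /= nth_rcons ltnn eqxx.
rewrite add0n; congr (_ ++ _).
apply: eq_in_filter => p; rewrite mem_iota /= => Hp.
by rewrite nth_rcons Hp.
Qed.

Lemma ncols_rcons w b : ncols (rcons w b) = ncols w + ~~ b.
Proof. by rewrite /ncols -cats1 count_cat /= addn0. Qed.

Lemma size_sl w : size w = ncols w + size (sl w).
Proof.
elim/last_ind: w => [//|w b IH].
rewrite sl_rcons ncols_rcons size_cat size_rcons IH.
by case: b => /=; rewrite ?addn0 ?addn1 ?addnS ?addSn.
Qed.

Lemma ncols_le w : ncols w <= size w.
Proof. by rewrite size_sl leq_addr. Qed.

Lemma sp_lt w i : i < size (sl w) -> south_pos w i < size w.
Proof.
move=> Hi; rewrite spE.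
have : nth 0 (sl w) i \in sl w by apply: mem_nth.
by rewrite mem_filter mem_iota /= => /andP[_ ->].
Qed.

Lemma sp_rcons w b i : i < size (sl w) -> south_pos (rcons w b) i = south_pos w i.
Proof. by move=> Hi; rewrite !spE sl_rcons nth_cat Hi. Qed.

Lemma rowlen_rcons w b i : i < size (sl w) -> rowlen (rcons w b) i = rowlen w i + ~~ b.
Proof.
move=> Hi; rewrite /rowlen sp_rcons // drop_rcons ?sp_lt //.
by rewrite -cats1 count_cat /= addn0.
Qed.

Lemma rowlen_last w : rowlen (rcons w true) (size (sl w)) = 0.
Proof.
rewrite /rowlen spE sl_rcons nth_cat ltnn subnn /= drop_oversize //.
by rewrite size_rcons.
Qed.

Lemma rowlen_le w i : rowlen w i <= ncols w.
Proof.
rewrite /rowlen /ncols.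
by rewrite -[in X in _ <= X](cat_take_drop (south_pos w i).+1 w) count_cat leq_addl.
Qed.

Lemma inshift_lt w r j : inshift w r j -> j < ncols w.
Proof.
rewrite /inshift; case: ifP => [Hr Hj|_ Hj]; first exact: leq_ltn_trans Hj Hr.
exact: leq_trans Hj (rowlen_le _ _).
Qed.

Lemma inshiftW_SS w r j : r < size w ->
  inshift (rcons w false) r.+1 j.+1 = inshift w r j.
Proof.
move=> Hr; rewrite /inshift ncols_rcons addn1 ltnS.
case: ifP => // Hc; rewrite subSS rowlen_rcons ?addn1 //.
have := size_sl w; lia.
Qed.

Lemma inshiftW_r0 w r : r <= size w -> inshift (rcons w false) r 0.
Proof.
move=> Hr; rewrite /inshift ncols_rcons addn1.
case: ifP => // Hc; rewrite rowlen_rcons ?addn1 //.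
have := size_sl w; lia.
Qed.

Lemma inshiftW_0S w j : inshift (rcons w false) 0 j.+1 = false.
Proof. by rewrite /inshift ncols_rcons addn1. Qed.

Lemma isdiagW_SS w r j : isdiag (rcons w false) r.+1 j.+1 = isdiag w r j.
Proof. by rewrite /isdiag ncols_rcons addn1 ltnS eqSS. Qed.

Lemma isdiagW_r0 w r : isdiag (rcons w false) r 0 = (r == 0).
Proof. by rewrite /isdiag ncols_rcons addn1 eq_sym andb_idl // => /eqP ->. Qed.

Lemma isdiagW_0S w j : isdiag (rcons w false) 0 j.+1 = false.
Proof. by rewrite /isdiag andbF. Qed.

Lemma inshiftS w r j : r < size w -> inshift (rcons w true) r j = inshift w r j.
Proof.
move=> Hr; rewrite /inshift ncols_rcons addn0.
case: ifP => // Hc; rewrite rowlen_rcons ?addn0 //.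
have := size_sl w; lia.
Qed.

Lemma inshiftS_last w j : inshift (rcons w true) (size w) j = false.
Proof.
rewrite /inshift ncols_rcons addn0 ltnNge ncols_le /=.
by rewrite {1}size_sl addKn rowlen_last.
Qed.

Lemma isdiagS w r j : isdiag (rcons w true) r j = isdiag w r j.
Proof. by rewrite /isdiag ncols_rcons addn0. Qed.

Definition Kexp n s (A : 'I_n -> bool) (c : {ffun 'I_n -> bool}) :=
  \sum_(r < n) ((~~ c r ==> ~~ (s || [exists r'' : 'I_n, (r'' < r) && c r''])) && A r).

Definition Kdef n s (A : 'I_n -> bool) x :=
  \sum_(c : {ffun 'I_n -> bool} | [forall r, c r ==> A r]) x ^ Kexp s A c.

Definition na n (A : 'I_n -> bool) := \sum_(r < n) A r.

Lemma Kexp_rec n s (A : 'I_n.+1 -> bool) b c :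
  Kexp s A (fcons b c) = ((~~ b ==> ~~ s) && A ord0) +
     Kexp (s || b) (fun r => A (lift ord0 r)) c.
Proof.
rewrite /Kexp big_ord_recl fcons0; congr (_ + _).
  have -> : [exists r'' : 'I_n.+1, (r'' < @ord0 n) && fcons b c r''] = false.
    by apply/existsP => -[i]; rewrite ltn0.
  by rewrite orbF.
apply: eq_bigr => r _; rewrite fconsS exists0 fcons0 lift0 /= -orbA.
by congr (_ && _); congr (_ ==> ~~ [|| _, _ | _]); apply: eq_existsb => i; rewrite fconsS.

Qed.

Lemma K_rec n s (A : 'I_n.+1 -> bool) x :
  Kdef s A x = \sum_(b : bool)
    ((b ==> A ord0) * x ^ ((~~ b ==> ~~ s) && A ord0) *
       Kdef (s || b) (fun r => A (lift ord0 r)) x).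
Proof.
rewrite /Kdef big_mkcond sum_ffunS; apply: eq_bigr => b _.
rewrite big_distrr /= [RHS]big_mkcond; apply: eq_bigr => c _.
rewrite forall0 fcons0 Kexp_rec expnD.
have -> : [forall i : 'I_n, fcons b c (lift ord0 i) ==> A (lift ord0 i)] =
          [forall i, c i ==> A (lift ord0 i)].
  by apply: eq_forallb => i; rewrite fconsS.
by case: (b ==> A ord0); case: [forall _, _]; rewrite /= ?mul1n ?muln0 ?mul0n.
Qed.

Lemma na_rec n (A : 'I_n.+1 -> bool) : na A = A ord0 + na (fun r => A (lift ord0 r)).
Proof. by rewrite /na big_ord_recl. Qed.

Lemma K0 s (A : 'I_0 -> bool) x : Kdef s A x = 1.
Proof.
rewrite /Kdef (big_pred1 [ffun => false]); first by rewrite /Kexp big_ord0.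
move=> c; apply/idP/eqP; last by move=> ->; apply/forallP => -[].
by move=> _; apply/ffunP => -[].
Qed.

Lemma K_true n (A : 'I_n -> bool) x : Kdef true A x = x.+1 ^ na A.
Proof.
elim: n A => [|n IH] A; first by rewrite K0 /na big_ord0.
rewrite K_rec big_bool /= !IH na_rec.
case: (A ord0) => /=; rewrite ?mul1n ?mul0n ?add0n ?expn1 ?expn0 ?mul1n //.
by rewrite add1n expnS mulSn addnC.
Qed.

Lemma K_false n (A : 'I_n -> bool) x :
  Kdef false A x + x ^ (na A).+1 = x * x.+1 ^ na A + x ^ na A.
Proof.
elim: n A => [|n IH] A; first by rewrite K0 /na big_ord0 expn0 expn1 muln1 addnC.
rewrite K_rec big_bool /= K_true na_rec.
set A' := fun r => A (lift ord0 r).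
move: (IH A'); case: (A ord0) => /= H.
  rewrite !mul1n expn1 add1n -addnA [x * _ + _]addnC -mulnDr H.
  rewrite !expnS; nia.
have -> : forall m, nat_of_bool false * m = 0 by [].
have -> : x ^ nat_of_bool false = 1 by []. by rewrite !add0n !mul1n H.
Qed.

Lemma Kdef_split n (A : 'I_n -> bool) x :
  Kdef false A x =
  \sum_(c : {ffun 'I_n -> bool} | [exists i, c i] && [forall r, c r ==> A r])
     x ^ Kexp false A c + x ^ na A.
Proof.
rewrite /Kdef (bigID (fun c : {ffun 'I_n -> bool} => [exists i, c i])) /=.
congr (_ + _); first by apply: eq_bigl => c; rewrite andbC.
rewrite (big_pred1 [ffun => false]).
  rewrite /Kexp /na; congr (_ ^ _); apply: eq_bigr => r _.
  rewrite ffunE /=; suff -> : [exists r'' : 'I_n, (r'' < r) && ([ffun=> false] : {ffun 'I_n -> bool}) r''] = false by [].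
  by apply/existsP => -[i]; rewrite ffunE andbF.
move=> c; apply/andP/eqP => [[_ /existsPn H]|->].
  by apply/ffunP => i; rewrite ffunE; apply/negbTE.
split; first by apply/forallP => i; rewrite ffunE.
by apply/existsPn => i; rewrite ffunE.
Qed.

Lemma inner_sum n (A : 'I_n -> bool) x :
  \sum_(col : {ffun 'I_n.+1 -> bool} |
          [exists i, col i] && [forall r : 'I_n, col (lift ord0 r) ==> A r])
     x ^ (col ord0 + \sum_(r < n) ((~~ col (lift ord0 r) ==>
            ~~ [exists r'' : 'I_n.+1, (r'' < lift ord0 r) && col r'']) && A r))
  + x ^ (na A).+1 = 2 * x * x.+1 ^ na A.
Proof.
have E b (c : {ffun 'I_n -> bool}) :
  fcons b c ord0 + \sum_(r < n) ((~~ fcons b c (lift ord0 r) ==>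
     ~~ [exists r'' : 'I_n.+1, (r'' < lift ord0 r) && fcons b c r'']) && A r)
  = b + Kexp b A c.
  rewrite fcons0 /Kexp; congr (_ + _); apply: eq_bigr => r _.
  rewrite fconsS exists0 fcons0 lift0 /=; congr (_ && _); congr (_ ==> ~~ (_ || _)).
  by apply: eq_existsb => i; rewrite fconsS /bump leq0n add1n ltnS.
rewrite big_mkcond sum_ffunS big_bool /=.
have -> : \sum_(c : {ffun 'I_n -> bool})
    (if [exists i : 'I_n.+1, fcons true c i] && [forall r : 'I_n, fcons true c (lift ord0 r) ==> A r]
     then x ^ (fcons true c ord0 + \sum_(r < n) ((~~ fcons true c (lift ord0 r) ==>
       ~~ [exists r'' : 'I_n.+1, (r'' < lift ord0 r) && fcons true c r'']) && A r)) else 0)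
   = x * Kdef true A x.
  rewrite /Kdef big_distrr /= [RHS]big_mkcond; apply: eq_bigr => c _.
  rewrite E exists0 fcons0 /= expnS.
  have -> : [forall r, fcons true c (lift ord0 r) ==> A r] = [forall r, c r ==> A r].
    by apply: eq_forallb => r; rewrite fconsS.
  by case: [forall _, _]; rewrite ?muln0.
have -> : \sum_(c : {ffun 'I_n -> bool})
    (if [exists i : 'I_n.+1, fcons false c i] && [forall r : 'I_n, fcons false c (lift ord0 r) ==> A r]
     then x ^ (fcons false c ord0 + \sum_(r < n) ((~~ fcons false c (lift ord0 r) ==>
       ~~ [exists r'' : 'I_n.+1, (r'' < lift ord0 r) && fcons false c r'']) && A r)) else 0)
   = \sum_(c : {ffun 'I_n -> bool} | [exists i, c i] && [forall r, c r ==> A r])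
     x ^ Kexp false A c.
  rewrite [RHS]big_mkcond; apply: eq_bigr => c _.
  rewrite E exists0 fcons0 /= add0n.
  have -> : [forall r, fcons false c (lift ord0 r) ==> A r] = [forall r, c r ==> A r].
    by apply: eq_forallb => r; rewrite fconsS.
  by have -> : [exists i, fcons false c (lift ord0 i)] = [exists i, c i]
    by apply: eq_existsb => r; rewrite fconsS.
have := K_false A x; rewrite K_true Kdef_split; lia.
Qed.

Section Tab.
Variable n : nat.
Implicit Types (w : seq bool) (f : {ffun 'I_n * 'I_n -> bool}).

Definition C0 w f := [forall r : 'I_n, forall j : 'I_n, ~~ inshift w r j ==> ~~ f (r, j)].
Definition C1 w f := [forall j : 'I_n, (j < ncols w) ==> [exists r : 'I_n, f (r, j)]].
Definition C2 w f := [forall r : 'I_n, forall j : 'I_n,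
         (inshift w r j && ~~ f (r, j)) ==>
         ~~ ([exists r' : 'I_n, (r' < r) && f (r', j)] &&
             [exists j' : 'I_n, (j' < j) && f (r, j')])].
Definition C3 w f := [forall r : 'I_n, forall j : 'I_n,
         (isdiag w r j && ~~ f (r, j)) ==> [forall j' : 'I_n, ~~ f (r, j')]].
Definition tabF w f := [&& C0 w f, C1 w f, C2 w f & C3 w f].

Definition unres w f (r : 'I_n) := [forall j : 'I_n, (inshift w r j && ~~ f (r, j)) ==>
   ~~ [exists r' : 'I_n, (r' < r) && f (r', j)]].
Definition avail w f (r : 'I_n) := unres w f r && ((r < ncols w) ==> f (r, r)).
Definition nav w f := \sum_(r < n) avail w f r.
Definition G w x := \sum_(f : {ffun 'I_n * 'I_n -> bool} | tabF w f) x ^ nav w f.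

End Tab.

Lemma is_tabBE n (w : n.-tuple bool) f : is_tabB (w, f) = tabF (val w) f.
Proof. by []. Qed.

Section SStep.
Variable n : nat.
Variable w : seq bool.
Hypothesis Hw : size w = n.
Let w' := rcons w true.

Definition extS (f : {ffun 'I_n * 'I_n -> bool}) : {ffun 'I_n.+1 * 'I_n.+1 -> bool} :=
  [ffun p => match unlift ord_max p.1, unlift ord_max p.2 with
             | Some r, Some j => f (r, j) | _, _ => false end].
Definition resS (f : {ffun 'I_n.+1 * 'I_n.+1 -> bool}) : {ffun 'I_n * 'I_n -> bool} :=
  [ffun p => f (lift ord_max p.1, lift ord_max p.2)].

Lemma extS_LL f r j : extS f (lift ord_max r, lift ord_max j) = f (r, j).
Proof. by rewrite ffunE /= !liftK. Qed.
Lemma extS_M1 f j : extS f (ord_max, j) = false.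
Proof. by rewrite ffunE /= unlift_none. Qed.
Lemma extS_M2 f r : extS f (r, ord_max) = false.
Proof. by rewrite ffunE /= unlift_none; case: unlift. Qed.

Lemma inshS (r j : 'I_n) : inshift w' (lift ord_max r) (lift ord_max j) = inshift w r j.
Proof. by rewrite !lift_max inshiftS // Hw. Qed.
Lemma inshS_M1 (j : 'I_n.+1) : inshift w' (@ord_max n) j = false.
Proof. have -> : (@ord_max n : nat) = size w by rewrite Hw. by rewrite inshiftS_last. Qed.
Lemma inshS_M2 (r : 'I_n.+1) : inshift w' r (@ord_max n) = false.
Proof.
apply/negP => /inshift_lt; rewrite /w' ncols_rcons addn0 /=.
by have := ncols_le w; rewrite Hw; lia.
Qed.
Lemma isdS (r j : 'I_n) : isdiag w' (lift ord_max r) (lift ord_max j) = isdiag w r j.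
Proof. by rewrite !lift_max isdiagS. Qed.
Lemma isdS_M1 (j : 'I_n.+1) : isdiag w' (@ord_max n) j = false.
Proof.
rewrite /isdiag /w' ncols_rcons addn0 /=.
by have := ncols_le w; rewrite Hw => H; rewrite ltnNge H.
Qed.
Lemma isdS_M2 (r : 'I_n) : isdiag w' (lift ord_max r) (@ord_max n) = false.
Proof. by rewrite /isdiag lift_max /= gtn_eqF ?andbF. Qed.

Lemma exS_col f (r j : 'I_n) :
  [exists r' : 'I_n.+1, (r' < lift ord_max r) && extS f (r', lift ord_max j)] =
  [exists r' : 'I_n, (r' < r) && f (r', j)].
Proof.
rewrite existsM extS_M1 andbF orFb.
by apply: eq_existsb => i; rewrite extS_LL !lift_max.
Qed.
Lemma exS_row f (r j : 'I_n) :
  [exists j' : 'I_n.+1, (j' < lift ord_max j) && extS f (lift ord_max r, j')] =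
  [exists j' : 'I_n, (j' < j) && f (r, j')].
Proof.
rewrite existsM extS_M2 andbF orFb.
by apply: eq_existsb => i; rewrite extS_LL !lift_max.
Qed.

Lemma tabS f : tabF w' (extS f) = tabF w f.
Proof.
rewrite /tabF; congr [&& _, _, _ & _].
- rewrite /C0 forallM; apply/andP/forallP => [[_ /forallP H] r|H].
    by apply/forallP => j; have := forallP (H r) (lift ord_max j); rewrite extS_LL inshS.
  split; first by apply/forallP => j; rewrite extS_M1 implybT.
  apply/forallP => r; rewrite forallM extS_M2 implybT /=.
  by apply/forallP => j; rewrite extS_LL inshS; exact: forallP (H r) j.
- rewrite /C1 forallM /w' ncols_rcons addn0.
  have -> : ((@ord_max n : nat) < ncols w) = false by have := ncols_le w; rewrite Hw /=; lia.
  rewrite implyFb andTb; apply: eq_forallb => j; rewrite lift_max; congr (_ ==> _).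
  by rewrite existsM extS_M1 /=; apply: eq_existsb => i; rewrite extS_LL.
- rewrite /C2 forallM; rewrite (_ : [forall j, _] = true); last first.
    by apply/forallP => j; rewrite inshS_M1.
  congr (true && _); apply: eq_forallb => r; rewrite forallM inshS_M2 /=.
  apply: eq_forallb => j; by rewrite inshS extS_LL exS_col exS_row.
- rewrite /C3 forallM; rewrite (_ : [forall j, _] = true); last first.
    by apply/forallP => j; rewrite isdS_M1.
  congr (true && _); apply: eq_forallb => r; rewrite forallM isdS_M2 /=.
  apply: eq_forallb => j; rewrite isdS extS_LL; congr (_ ==> _).
  by rewrite forallM extS_M2 /=; apply: eq_forallb => i; rewrite extS_LL.
Qed.

Lemma navS f : nav w' (extS f) = (nav w f).+1.
Proof.
rewrite /nav big_ord_recr -[(\sum_(r < n) avail w f r).+1]addn1; congr (_ + _); last first.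
  rewrite /avail /unres (_ : [forall j, _] = true); last first.
    by apply/forallP => j; rewrite inshS_M1.
  rewrite /w' ncols_rcons addn0 /=.
  by have := ncols_le w; rewrite Hw => H; rewrite ltnNge H.
apply: eq_bigr => r _.
have -> : widen_ord (leqnSn n) r = lift ord_max r by apply: ord_inj; rewrite lift_max.
rewrite /avail /unres; congr (_ && _).
  rewrite forallM inshS_M2 andFb implyFb andTb; apply: eq_forallb => j.
  by rewrite inshS extS_LL exS_col.
by rewrite /w' ncols_rcons addn0 lift_max extS_LL.
Qed.

Lemma GS x : G n.+1 w' x = x * G n w x.
Proof.
rewrite /G big_distrr /=.
rewrite (reindex (@extS)); last first.
  exists resS => f' Hf'.
    by apply/ffunP => -[r j]; rewrite ffunE extS_LL.
  rewrite inE in Hf'; case/and4P: Hf' => /forallP H0 _ _ _.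
  apply/ffunP => -[r j]; rewrite ffunE /=.
  case: (unliftP ord_max r) => [r0 ->|->]; last first.
    by apply/esym/negbTE; have := forallP (H0 ord_max) j; rewrite inshS_M1.
  case: (unliftP ord_max j) => [j0 ->|->]; first by rewrite ?liftK ffunE.
  by rewrite ?unlift_none; apply/esym/negbTE; have := forallP (H0 (lift ord_max r0)) ord_max; rewrite inshS_M2.
rewrite [LHS](eq_bigl (fun f => tabF w f)); last by move=> f; rewrite tabS.
by apply: eq_bigr => f _; rewrite navS expnS.
Qed.

End SStep.

Lemma forall_split (I J : finType) (P EA EL : I -> J -> bool) (cl : I -> bool) :
  [forall i, forall j, P i j ==> ~~ (EA i j && (cl i || EL i j))] =
  [forall i, forall j, P i j ==> ~~ (EA i j && EL i j)] &&
  [forall i, cl i ==> [forall j, P i j ==> ~~ EA i j]].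
Proof.
apply/idP/andP => [/forallP H|[/forallP H1 /forallP H2]].
  split; apply/forallP => i; have /forallP Hi := H i.
    apply/forallP => j; apply/implyP => Pij; have := implyP (Hi j) Pij.
    by apply: contra => /andP[-> ->]; rewrite orbT.
  apply/implyP => ci; apply/forallP => j; apply/implyP => Pij.
  by have := implyP (Hi j) Pij; rewrite ci andbT.
apply/forallP => i; apply/forallP => j; apply/implyP => Pij.
have h1 := implyP (forallP (H1 i) j) Pij.
case: (boolP (cl i)) => ci /=; last by [].
have h2 := implyP (forallP (implyP (H2 i) ci) j) Pij.
by apply: contra h2 => /andP[].
Qed.

Lemma forall_andr (I : finType) (c U D : I -> bool) :
  [forall i, c i ==> (U i && D i)] = [forall i, c i ==> U i] && [forall i, c i ==> D i].
Proof.
apply/forallP/andP => [H|[/forallP H1 /forallP H2] i].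
  by split; apply/forallP => i; case/boolP: (c i) (H i) => //= _ /andP[].
by case/boolP: (c i) (H1 i) (H2 i) => //= _ -> ->.
Qed.

Lemma forall_andb (I : finType) (P Q : pred I) :
  [forall i, P i && Q i] = [forall i, P i] && [forall i, Q i].
Proof.
apply/forallP/andP => [H|[/forallP H1 /forallP H2] i]; last by rewrite H1 H2.
by split; apply/forallP => i; case/andP: (H i).
Qed.

Section WStep.
Variable n : nat.
Variable w : seq bool.
Hypothesis Hw : size w = n.
Let w' := rcons w false.

Definition glue (p : {ffun 'I_n * 'I_n -> bool} * {ffun 'I_n.+1 -> bool}) :
  {ffun 'I_n.+1 * 'I_n.+1 -> bool} :=
  [ffun q => match unlift ord0 q.2 with
             | None => p.2 q.1
             | Some j => if unlift ord0 q.1 is Some r then p.1 (r, j) else false end].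
Definition ungl (f : {ffun 'I_n.+1 * 'I_n.+1 -> bool}) :=
  ([ffun q : 'I_n * 'I_n => f (lift ord0 q.1, lift ord0 q.2)], [ffun r => f (r, ord0)]).

Lemma gl_LL f c r j : glue (f, c) (lift ord0 r, lift ord0 j) = f (r, j).
Proof. by rewrite ffunE /= !liftK. Qed.
Lemma gl_0L f c j : glue (f, c) (ord0, lift ord0 j) = false.
Proof. by rewrite ffunE /= liftK unlift_none. Qed.
Lemma gl_c f c r : glue (f, c) (r, ord0) = c r.
Proof. by rewrite ffunE /= unlift_none. Qed.

Lemma inshW (r j : 'I_n) : inshift w' (lift ord0 r) (lift ord0 j) = inshift w r j.
Proof. by rewrite !lift0 inshiftW_SS // Hw. Qed.
Lemma inshW_r0 (r : 'I_n.+1) : inshift w' r (@ord0 n).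
Proof. by apply: inshiftW_r0; rewrite Hw -ltnS. Qed.
Lemma inshW_0L (j : 'I_n) : inshift w' (@ord0 n) (lift ord0 j) = false.
Proof. by rewrite lift0 inshiftW_0S. Qed.
Lemma isdW (r j : 'I_n) : isdiag w' (lift ord0 r) (lift ord0 j) = isdiag w r j.
Proof. by rewrite !lift0 isdiagW_SS. Qed.
Lemma isdW_L0 (r : 'I_n) : isdiag w' (lift ord0 r) (@ord0 n) = false.
Proof. by rewrite lift0 isdiagW_r0. Qed.
Lemma isdW_00 : isdiag w' (@ord0 n) (@ord0 n).
Proof. by rewrite isdiagW_r0. Qed.
Lemma isdW_0L (j : 'I_n) : isdiag w' (@ord0 n) (lift ord0 j) = false.
Proof. by rewrite lift0 isdiagW_0S. Qed.

Lemma ex_lt0 (P : pred 'I_n.+1) : [exists r' : 'I_n.+1, (r' < @ord0 n) && P r'] = false.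
Proof. by apply/existsP => -[i]; rewrite ltn0. Qed.

Lemma exW_col f c (r j : 'I_n) :
  [exists r' : 'I_n.+1, (r' < lift ord0 r) && glue (f, c) (r', lift ord0 j)] =
  [exists r' : 'I_n, (r' < r) && f (r', j)].
Proof.
rewrite exists0 gl_0L andbF orFb.
by apply: eq_existsb => i; rewrite gl_LL !lift0 ltnS.
Qed.
Lemma exW_row f c (r j : 'I_n) :
  [exists j' : 'I_n.+1, (j' < lift ord0 j) && glue (f, c) (lift ord0 r, j')] =
  c (lift ord0 r) || [exists j' : 'I_n, (j' < j) && f (r, j')].
Proof.
rewrite exists0 gl_c lift0 /=; congr (_ || _).
by apply: eq_existsb => i; rewrite gl_LL /bump leq0n add1n ltnS.
Qed.

Lemma tabW f c : tabF w' (glue (f, c)) =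
  tabF w f && ([exists i, c i] && [forall r : 'I_n, c (lift ord0 r) ==> avail w f r]).
Proof.
have E0 : C0 w' (glue (f, c)) = C0 w f.
  rewrite /C0 forall0 forall0 inshW_r0 -[~~ true]/false implyFb andTb.
  rewrite (_ : [forall i : 'I_n, _] = true); last by apply/forallP => j; rewrite gl_0L implybT.
  rewrite andTb; apply: eq_forallb => r; rewrite forall0 inshW_r0 -[~~ true]/false implyFb andTb.
  by apply: eq_forallb => j; rewrite inshW gl_LL.
have E1 : C1 w' (glue (f, c)) = [exists i, c i] && C1 w f.
  rewrite /C1 forall0 /w' ncols_rcons addn1; congr (_ && _).
    by rewrite /=; apply: eq_existsb => i; rewrite gl_c.
  apply: eq_forallb => j; rewrite lift0 ltnS; congr (_ ==> _).
  by rewrite exists0 gl_0L orFb; apply: eq_existsb => i; rewrite gl_LL.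
have E2 : C2 w' (glue (f, c)) =
          C2 w f && [forall r : 'I_n, c (lift ord0 r) ==> unres w f r].
  rewrite /C2 forall0 forall0 ex_lt0 andFb implybT andTb.
  rewrite (_ : [forall i : 'I_n, _] = true); last by apply/forallP => j; rewrite inshW_0L.
  rewrite andTb /unres -forall_split; apply: eq_forallb => r.
  rewrite forall0 ex_lt0 andbF implybT andTb; apply: eq_forallb => j.
  by rewrite inshW gl_LL exW_col exW_row.
have E3 : C3 w' (glue (f, c)) =
          C3 w f && [forall r : 'I_n, c (lift ord0 r) ==> ((r < ncols w) ==> f (r, r))].
  rewrite /C3 forall0 forall0 isdW_00 gl_c forall0 gl_c.
  rewrite (_ : [forall i : 'I_n, ~~ glue _ _] = true); last first.
    by apply/forallP => j; rewrite gl_0L.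
  rewrite andbT implybb andTb.
  rewrite (_ : [forall i : 'I_n, _] = true); last by apply/forallP => j; rewrite isdW_0L.
  rewrite andTb -forall_andb; apply: eq_forallb => r.
  rewrite forall0 isdW_L0 andTb.
  apply/forallP/andP => [H|[/forallP H1 H2] j].
    split.
      apply/forallP => j; have := H j; rewrite isdW gl_LL forall0 gl_c.
      by rewrite (eq_forallb (fun j' => congr1 negb (gl_LL f c r j'))); case: (_ && _) => //= /andP[].
    apply/implyP => cr; apply/implyP => rc; apply/negPn/negP => fr.
    have := H r; rewrite isdW gl_LL /isdiag rc eqxx fr forall0 gl_c cr.
    by [].
  rewrite isdW gl_LL forall0 gl_c.
  rewrite (eq_forallb (fun j' => congr1 negb (gl_LL f c r j'))).
  have := H1 j; case: (boolP (isdiag w r j && ~~ f (r, j))) => //= /andP[Hd Hf] ->.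
  rewrite andbT; apply/negP => cr.
  move: Hd; rewrite /isdiag => /andP[rc /eqP Ejr].
  have Ej : j = r by apply: ord_inj.
  by move: Hf; rewrite Ej (implyP (implyP H2 cr) rc).
rewrite /tabF E0 E1 E2 E3 /avail forall_andr.
by case: (C0 w f); case: (C1 w f); case: (C2 w f); case: (C3 w f);
   case: [exists _, _]; case: [forall _, _]; case: [forall _, _].
Qed.

Lemma availW0 f c : avail w' (glue (f, c)) ord0 = c ord0.
Proof.
rewrite /avail /unres (_ : [forall j, _] = true); last first.
  by apply/forallP => j; rewrite ex_lt0 implybT.
by rewrite /w' ncols_rcons addn1 /= gl_c.
Qed.

Lemma availWS f c (r : 'I_n) : avail w' (glue (f, c)) (lift ord0 r) =
  (~~ c (lift ord0 r) ==> ~~ [exists r'' : 'I_n.+1, (r'' < lift ord0 r) && c r'']) &&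
  avail w f r.
Proof.
rewrite /avail /unres forall0 inshW_r0 andTb gl_c -!andbA; congr (_ && _).
  congr (_ ==> ~~ _); apply: eq_existsb => i; by rewrite gl_c.
congr (_ && _); first by apply: eq_forallb => j; rewrite inshW gl_LL exW_col.
by rewrite /w' ncols_rcons addn1 lift0 ltnS gl_LL.
Qed.

Definition colok f (c : {ffun 'I_n.+1 -> bool}) :=
  [exists i, c i] && [forall r : 'I_n, c (lift ord0 r) ==> avail w f r].
Definition expW f (c : {ffun 'I_n.+1 -> bool}) := c ord0 + \sum_(r < n)
  ((~~ c (lift ord0 r) ==> ~~ [exists r'' : 'I_n.+1, (r'' < lift ord0 r) && c r'']) &&
   avail w f r).

Lemma navW f c : nav w' (glue (f, c)) = expW f c.
Proof.
rewrite /nav big_ord_recl availW0 /expW; congr (_ + _).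
by apply: eq_bigr => r _; rewrite availWS.
Qed.

Lemma GW_L x : G n.+1 w' x =
  \sum_(f | tabF w f) \sum_(c | colok f c) x ^ expW f c.
Proof.
rewrite pair_big_dep /G (reindex glue); last first.
  exists ungl => [[f c] _|f' Hf'].
    by congr pair; apply/ffunP => q; rewrite ffunE ?gl_c //; case: q => r j; rewrite gl_LL.
  rewrite inE in Hf'; case/and4P: Hf' => /forallP H0 _ _ _.
  apply/ffunP => -[r j]; rewrite ffunE /=.
  case: (unliftP ord0 j) => [j0 ->|->]; last by rewrite ?unlift_none ffunE.
  rewrite ?liftK; case: (unliftP ord0 r) => [r0 ->|->]; first by rewrite ?liftK ffunE.
  rewrite ?unlift_none; apply/esym/negbTE.
  by have := forallP (H0 ord0) (lift ord0 j0); rewrite inshW_0L.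
apply: eq_big => [[f c]|[f c] _]; first by rewrite tabW.
by rewrite navW.
Qed.

Lemma GW x : G n.+1 w' x + x * G n w x = 2 * x * G n w x.+1.
Proof.
rewrite GW_L /G big_distrr -big_split /= big_distrr /=.
apply: eq_bigr => f _; rewrite -expnS.
exact: (inner_sum (avail w f) x).
Qed.
End WStep.

Definition Gs (s : seq bool) x := G (size s) s x.

Lemma GsT m (v : m.-tuple bool) x : Gs v x = G m v x.
Proof. by rewrite /Gs size_tuple. Qed.

Lemma Gs_step s x : Gs (rcons s true) x + Gs (rcons s false) x = 2 * x * Gs s x.+1.
Proof.
rewrite /Gs !size_rcons GS // -(GW (erefl (size s))); lia.
Qed.

Lemma Gs_nil x : Gs [::] x = 1.
Proof.
rewrite /Gs /G /= (big_pred1 [ffun => false]).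
  by rewrite /nav big_ord0.
move=> f; apply/idP/eqP => [_|->]; first by apply/ffunP => -[[]].
by rewrite /tabF /C0 /C1 /C2 /C3; apply/and4P; split; apply/forallP => -[].
Qed.

Definition rf x m := \prod_(i < m) (x + i).

Lemma rfS x m : rf x m.+1 = x * rf x.+1 m.
Proof.
rewrite /rf big_ord_recl addn0; congr (_ * _).
by apply: eq_bigr => i _; rewrite lift0 addnS addSn.
Qed.

Lemma rf1 m : rf 1 m = m`!.
Proof.
elim: m => [|m IH]; first by rewrite /rf big_ord0.
by rewrite /rf big_ord_recr /= -/(rf 1 m) IH factS mulnC add1n.
Qed.

Lemma rfD x a b : rf x (a + b) = rf x a * rf (x + a) b.
Proof.
elim: a x => [|a IH] x; first by rewrite /rf big_ord0 mul1n addn0.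
by rewrite addSn !rfS IH addSnnS mulnA.
Qed.

Lemma Tsum m x : \sum_(v : m.-tuple bool) Gs v x = 2 ^ m * rf x m.
Proof.
elim: m x => [|m IH] x.
  rewrite (big_pred1 [tuple]) ?Gs_nil /rf ?big_ord0 //.
  by move=> v; apply/idP/eqP => // _; apply: val_inj; rewrite /= (size0nil (size_tuple v)).
rewrite (sum_tupleS m (fun s => Gs s x)) (eq_bigr (fun v : m.-tuple bool => 2 * x * Gs v x.+1)); last first.
  by move=> v _; rewrite Gs_step.
by rewrite -big_distrr /= IH rfS expnS; lia.
Qed.

Definition Qsum p m x := \sum_(v : m.-tuple bool) nth false v p * Gs v x.

Lemma Q_lt p m x : p < m -> Qsum p m.+1 x = 2 * x * Qsum p m x.+1.
Proof.
move=> pm; rewrite /Qsum (sum_tupleS m (fun s => nth false s p * Gs s x)) big_distrr /=; apply: eq_bigr => v _.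
rewrite !nth_rcons size_tuple pm -mulnDr Gs_step; lia.
Qed.

Lemma Q_eq p x : Qsum p p.+1 x = x * (2 ^ p * rf x p).
Proof.
rewrite /Qsum (sum_tupleS p (fun s => nth false s p * Gs s x)) -Tsum big_distrr /=; apply: eq_bigr => v _.
by rewrite !nth_rcons size_tuple ltnn eqxx mul1n mul0n addn0 /Gs size_rcons GS.
Qed.

Lemma Q_closed p j x : Qsum p (p.+1 + j) x = 2 ^ (p + j) * rf x (j + p) * (x + j).
Proof.
elim: j x => [|j IH] x; first by rewrite !addn0 add0n Q_eq; nia.
rewrite addnS Q_lt ?IH; last by rewrite ltnS leq_addr.
rewrite addnS expnS (addSn j p) rfS (addnS x j); nia.
Qed.

Lemma sum_pairs n (P : pred (tabT n)) :
  \sum_(t | P t) 1 = \sum_(w : n.-tuple bool) \sum_(f | P (w, f)) 1.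
Proof. by rewrite pair_big_dep /=; apply: eq_bigl => -[w f]. Qed.

Lemma card_tabB n : #|tabB n| = \sum_(w : n.-tuple bool) Gs w 1.
Proof.
rewrite -sum1_card (sum_pairs (fun t => t \in tabB n)).
apply: eq_bigr => w _; rewrite GsT /G.
by apply: eq_big => [f|f _]; rewrite ?in_set ?exp1n.
Qed.

Lemma card_tabBS n k : #|[set t in tabB n | S_event k t]| =
  \sum_(w : n.-tuple bool) nth false w k.-1 * Gs w 1.
Proof.
rewrite -sum1_card (sum_pairs (fun t => t \in [set t in tabB n | S_event k t])).
apply: eq_bigr => w _; rewrite GsT /G.
case E : (nth false w k.-1); rewrite ?mul0n ?mul1n.
  by apply: eq_big => [f|f _]; rewrite ?in_set ?exp1n //= /S_event /= E andbT.
by apply: big_pred0 => f; rewrite !in_set /S_event /= E andbF.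
Qed.

Unset Implicit Arguments.
Local Open Scope ring_scope.
Import GRing.Theory Num.Theory.

Theorem mainTheorem3 (n k : nat) : (1 <= k <= n)%N ->
  probB (@S_event n k) = 2^-1 * (1 - (k%:R - 1) / n%:R).
Proof.
case/andP => k1 kn; rewrite /probB card_tabBS card_tabB Tsum rf1.
move: k1 kn; case: k => // p _ pn.
have [j En] : exists j, n = (p.+1 + j)%N by exists (n - p.+1)%N; lia.
subst n; rewrite -/(Qsum p (p.+1 + j) 1) Q_closed rf1.
rewrite (addSn p j) factS (addnC j p) expnS.
have : ((p + j)`!)%:R != 0 :> rat by rewrite pnatr_eq0 -lt0n fact_gt0.
move: ((p + j)`!) => F hF.
rewrite !(natrM, natrX, natrD) -(addn1 p) -(addn1 (p + j)) !natrD.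
have h2 : (p%:R + j%:R + 1) != 0 :> rat.
  by rewrite -natrD natr1 pnatr_eq0.
field; by rewrite h2 hF expf_neq0.
Qed.
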